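(* Let $S\subset\mathbb{R}^n$ be a smooth cylinder hypersurface with axis vector $e$, and consider rolling of the particle on $S$ under the constant force $f=(0,-mge)$. A path $q(t)=(A(t),a(t))\in SO(n)\times S$ that solves the constrained Newton's equation for this rolling motion is the solution of an initial value problem for the system $$\dot a=rU\nu_a,\qquad \dot A=UA,\qquad \dot U=-\frac{1}{(1+\gamma^2)r}\big(r^2U\mathbb{S}_aU\nu_a-ge\big)\wedge\nu_a,$$ where $U=\dot AA^{-1}\in\mathfrak{so}(n)$.
   Context: The particle is a ball of radius $r>0$ with rotationally symmetric mass distribution of total mass $m$ and second-moment matrix per unit mass $\lambda I$, $\lambda=(r\gamma)^2/2$, $\gamma>0$. $S$ is the hypersurface of positions of the center of the particle, $\nu_a$ its unit normal at $a$ (pointing into the region containing the centers), and $\mathbb{S}_a$ its shape operator: the symmetric map of $T_aS$ with $\mathbb{S}_av=-D_v\nu$ (directional derivative). For $a,b\in\mathbb{R}^n$, $a\wedge b\in\mathfrak{so}(n)$ is $(a\wedge b)x=(a\cdot x)b-(b\cdot x)a$. On $M=SO(n)\times S$ use the kinetic energy metric $\langle(U_\xi A,u_\xi),(U_\eta A,u_\eta)\rangle=m\{\tfrac{(r\gamma)^2}{2}\mathrm{Tr}(U_\xi U_\eta^\dagger)+u_\xi\cdot u_\eta\}$, with Levi-Civita connection $\nabla$; for $\dot q=(UA,u)$ one has $\frac{\nabla\dot q}{dt}=(\dot UA,\frac{Du}{dt})$, $D$ the Levi-Civita connection of $S$. The no-slip space at $q=(A,a)$ is $\mathfrak{S}_q=\{(UA,u):u=rU\nu_a\}$,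 and $\mathfrak{S}^\perp_q$ denotes its orthogonal complement inside $T_qM$ (with respect to the kinetic energy metric). A path satisfies the constrained Newton's equation if $\dot q(t)\in\mathfrak{S}_{q(t)}$ for all $t$ and $\frac{\nabla\dot q}{dt}=m^{-1}f+N$ for some $N(t)\in\mathfrak{S}^\perp_{q(t)}$. *)

(* Defs.v *)
From HB Require Import structures.
From mathcomp Require Import all_boot all_order all_algebra.
From mathcomp Require Import all_classical all_reals all_analysis.
Set Implicit Arguments. Unset Strict Implicit. Unset Printing Implicit Defensive.
Import Order.TTheory GRing.Theory Num.Theory.
Import numFieldNormedType.Exports.
Local Open Scope classical_set_scope.
Local Open Scope ring_scope.

Section Rolling.
Variables (R : realType) (n : nat).
Notation vec := 'cV[R]_n.
Notation mat := 'M[R]_n.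

Definition dotv (u v : vec) : R := (u^T *m v) ord0 ord0.

Definition wedge (a b : vec) : mat := b *m a^T - a *m b^T.

Definition skew (U : mat) : Prop := U^T = - U.
Definition rotation (A : mat) : Prop := A^T *m A = 1%:M /\ \det A = 1.

Fixpoint smooth_k (k : nat) (O : set vec) {W : normedModType R} (f : vec -> W) : Prop :=
  match k with
  | 0 => forall x, O x -> {for x, continuous f}
  | k'.+1 => forall v : vec, (forall x, O x -> derivable f x v) /\
                             smooth_k k' O (fun x => derive f x v)
  end.
Definition smooth_on (O : set vec) {W : normedModType R} (f : vec -> W) : Prop :=
  forall k, smooth_k k O f.

Definition grad (phi : vec -> R) (x : vec) : vec :=
  \col_i derive phi x (delta_mx i ord0 : vec).

(* Hypersurface S = {x in O | phi x = 0}, O open, phi smooth on O with nonvanishing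
   gradient on S; this describes exactly the oriented embedded hypersurfaces. *)
Definition hsurf (O : set vec) (phi : vec -> R) : set vec := [set x | O x /\ phi x = 0].

Definition regular_defining (O : set vec) (phi : vec -> R) : Prop :=
  open O /\ smooth_on O phi /\ (forall x, hsurf O phi x -> grad phi x != 0).

(* unit normal field nu = grad phi / |grad phi| (the orientation, i.e. the side of S
   containing the centers, is encoded by the sign of phi) *)
Definition unormal (phi : vec -> R) (x : vec) : vec :=
  (Num.sqrt (dotv (grad phi x) (grad phi x)))^-1 *: grad phi x.

Definition shapeop (phi : vec -> R) (a v : vec) : vec := - derive (unormal phi) a v.

Definition tangentS (phi : vec -> R) (a v : vec) : Prop := dotv (unormal phi a) v = 0.

Definition cylinder (O : set vec) (phi : vec -> R) (e : vec) : Prop :=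
  dotv e e = 1 /\ forall x (s : R), hsurf O phi x -> hsurf O phi (x + s *: e).

Definition tangentM (phi : vec -> R) (A : mat) (a : vec) (xi : mat * vec) : Prop :=
  skew (xi.1 *m invmx A) /\ tangentS phi a xi.2.

Definition kinetic (m r gamma : R) (A : mat) (xi eta : mat * vec) : R :=
  m * ((r * gamma) ^+ 2 / 2 * \tr ((xi.1 *m invmx A) *m (eta.1 *m invmx A)^T)
       + dotv xi.2 eta.2).

Definition noslip (phi : vec -> R) (r : R) (A : mat) (a : vec) (xi : mat * vec) : Prop :=
  tangentM phi A a xi /\ xi.2 = r *: ((xi.1 *m invmx A) *m unormal phi a).

Definition noslip_perp (phi : vec -> R) (m r gamma : R) (A : mat) (a : vec)
    (N : mat * vec) : Prop :=
  tangentM phi A a N /\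
  forall xi, noslip phi r A a xi -> kinetic m r gamma A N xi = 0.

Definition angvel (A : R -> mat) (t : R) : mat := derive1 A t *m invmx (A t).

(* Levi-Civita connection of S (induced metric): tangential part of the ambient
   derivative of u along a. *)
Definition covD (phi : vec -> R) (a : vec) (du : vec) : vec :=
  du - dotv (unormal phi a) du *: unormal phi a.

Definition constrained_newton (O : set vec) (phi : vec -> R) (m r gamma : R)
    (f : mat * vec) (I : set R) (A : R -> mat) (a : R -> vec) : Prop :=
  forall t, I t ->
    rotation (A t) /\ hsurf O phi (a t) /\
    derivable A t 1 /\ derivable a t 1 /\
    derivable (derive1 A) t 1 /\ derivable (derive1 a) t 1 /\
    noslip phi r (A t) (a t) (derive1 A t, derive1 a t) /\
    exists N : mat * vec, noslip_perp phi m r gamma (A t) (a t) N /\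
      (derive1 (angvel A) t *m A t, covD phi (a t) (derive1 (derive1 a) t))
      = (m^-1 *: f.1 + N.1, m^-1 *: f.2 + N.2).

End Rolling.

(* Main.v *)
Require Import Defs.
From HB Require Import structures.
From mathcomp Require Import all_boot all_order all_algebra.
From mathcomp Require Import all_classical all_reals all_analysis.
From mathcomp Require Import ring lra.
Import Order.TTheory GRing.Theory Num.Theory.
Import numFieldNormedType.Exports.
Local Open Scope classical_set_scope.
Local Open Scope ring_scope.

Section C1.
Variables (R : realType) (V : normedModType R).

Lemma dir_deriv1 (f : V -> R) (p v : V) (s : R) :
  derivable f (p + s *: v) v ->
  is_derive s 1 (fun u : R => f (p + u *: v)) ('D_v f (p + s *: v)).
Proof.
move=> dv.
have E : (fun h : R => h^-1 *: (((fun u : R => f (p + u *: v)) \o shift s) (h *: 1)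
           - f (p + s *: v))) =
         (fun h : R => h^-1 *: ((f \o shift (p + s *: v)) (h *: v) - f (p + s *: v))).
  apply/funext => h /=; congr (_ *: (f _ - _)).
  by rewrite /= scaler1 scalerDl addrCA.
apply: DeriveDef; first by rewrite /derivable E.
by rewrite /derive E.
Qed.
End C1.

Section C1.
Variables (R : realType).

Lemma mvt_bound (F dF : R -> R) (h c eps : R) :
  (forall u : R, `|u| <= `|h| -> is_derive u (1:R) F (dF u)) ->
  (forall u : R, `|u| <= `|h| -> `|dF u - c| <= eps) ->
  `|F h - F 0 - h * c| <= `|h| * eps.
Proof.
move=> dF1 dF2.
have cont : forall u, `|u| <= `|h| -> {for u, continuous F}.
  move=> u /dF1 [d _]; apply: differentiable_continuous.
  exact/derivable1_diffP.
have [h0|h0|->] := ltgtP h 0; last by rewrite subrr mul0r subrr !normr0 mul0r.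
- have [xi xin E] : exists2 xi, xi \in `]h, 0[ & F 0 - F h = dF xi * (0 - h).
    apply: MVT => //.
      move=> x; rewrite in_itv /= => /andP[hx x0]; apply: dF1.
      by rewrite !ltr0_norm // lerN2 ltW.
    apply: continuous_in_subspaceT => x; rewrite inE /= in_itv /= => /andP[hx x0].
    apply: cont; rewrite (ltr0_norm h0).
    have [x0'|x0'] := leP 0 x; first by rewrite ger0_norm //; lra.
    by rewrite ltr0_norm //; lra.
  move: xin; rewrite in_itv /= => /andP[hx x0].
  have -> : F h - F 0 - h * c = h * (dF xi - c) by lra.
  rewrite normrM ler_wpM2l //; apply: dF2.
  by rewrite !ltr0_norm //; lra.
- have [xi xin E] : exists2 xi, xi \in `]0, h[ & F h - F 0 = dF xi * (h - 0).
    apply: MVT => //.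
      move=> x; rewrite in_itv /= => /andP[hx x0]; apply: dF1.
      by rewrite !gtr0_norm // ltW.
    apply: continuous_in_subspaceT => x; rewrite inE /= in_itv /= => /andP[hx x0].
    by apply: cont; rewrite (gtr0_norm h0) ger0_norm.
  move: xin; rewrite in_itv /= => /andP[hx x0].
  have -> : F h - F 0 - h * c = h * (dF xi - c) by rewrite E; lra.
  rewrite normrM ler_wpM2l //; apply: dF2.
  by rewrite !gtr0_norm //; lra.
Qed.
End C1.

Section C1n.
Variables (R : realType) (n : nat).
Local Notation vec := 'cV[R]_n.
Definition ee (i : 'I_n) : vec := delta_mx i ord0.

Lemma entry_le_norm (h : vec) i : `|h i ord0| <= `|h|.
Proof.
change (`|h i ord0| <= mx_norm h); rewrite mx_normrE.
exact: (le_bigmax _ (fun ij : 'I_n * 'I_1 => `|h ij.1 ij.2|) (i, ord0)).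
Qed.

Lemma norm_le_entries (h : vec) d : 0 <= d -> (forall i, `|h i ord0| <= d) -> `|h| <= d.
Proof.
move=> d0 H; change (mx_norm h <= d); rewrite mx_normrE.
by apply: bigmax_le => // -[i j] _; rewrite (ord1 j); exact: H.
Qed.

Lemma C1_differentiable (f : vec -> R) (O : set vec) (x0 : vec) :
  open O -> O x0 ->
  (forall v x, O x -> derivable f x v) ->
  (forall v x, O x -> {for x, continuous (fun y => 'D_v f y)}) ->
  differentiable f x0.
Proof.
move=> oO Ox0 fd fc.
pose c i := 'D_(ee i) f x0.
pose Lf (h : vec) : R := \sum_i h i ord0 * c i.
have Llin : linear Lf.
  move=> k u w; rewrite /Lf scaler_sumr -big_split /=; apply: eq_bigr => i _.
  by rewrite !mxE /GRing.scale /=; ring.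
pose LM := GRing.isLinear.Build _ _ _ _ _ Llin.
pose L : {linear vec -> R} := HB.pack Lf LM.
have Lc : continuous L.
  move=> x; change ({for x, continuous Lf}).
  have -> : Lf = \sum_i (fun h : vec => h i ord0 * c i).
    by apply/funext=> h; rewrite fct_sumE.
  apply: (big_ind (fun g : vec -> R => {for x, continuous g})).
  - by apply: cst_continuous.
  - by move=> g1 g2; apply: continuousD.
  - move=> i _; apply: (@continuousM _ _ (fun h : vec => h i ord0) (fun=> c i)).
      exact: coord_continuous.
    exact: cst_continuous.
suff Ho : (f : vec -> R^o) \o shift x0 = cst (f x0) + (L : vec -> R^o) +o_ (0 : vec) id.
  by apply/diff_locallyP; rewrite (diff_unique Lc Ho); split.
apply/eqaddoP => eps eps0.
pose eps' := eps / n.+1%:R.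
have eps'0 : 0 < eps' by rewrite divr_gt0 // ltr0n.
have [d d0 Hd] : exists2 d : R, 0 < d & forall y, `|x0 - y| < d ->
    O y /\ forall i, `|c i - 'D_(ee i) f y| <= eps'.
  have N1 : \forall y \near x0, O y /\ forall i, `|c i - 'D_(ee i) f y| <= eps'.
    near=> y; split.
      by near: y; apply: open_nbhs_nbhs; split.
    near: y; apply: filter_forall => i.
    by move: (fc (ee i) x0 Ox0) => /cvgrPdist_le; apply.
  have /nbhs_ballP [d d0 Hd'] := N1.
  by exists d => // y Hy; apply: Hd'; rewrite -ball_normE /=.
near=> h.
have hd : `|h| < d.
  near: h. exact: (@nbhs0_lt R vec d d0).
pose p (k : nat) : vec := x0 + \col_i (if (i < k)%N then h i ord0 else 0).
have p0 : p 0%N = x0.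
  rewrite /p; have -> : \col_i (if (i < 0)%N then h i ord0 else 0) = 0 :> vec.
    by apply/matrixP => i j; rewrite !mxE.
  by rewrite addr0.
have pn : p n = h + x0.
  rewrite /p addrC; congr (_ + _); apply/matrixP => i j; rewrite !mxE ltn_ord.
  by rewrite (ord1 j).
have pS : forall k : 'I_n, p k.+1 = p k + h k ord0 *: ee k.
  move=> k; rewrite /p -addrA; congr (_ + _); apply/matrixP => i j.
  rewrite !mxE (ord1 j) eqxx andbT ltnS.
  case: (ltngtP i k) => [ik|ik|/val_inj ->]; last by rewrite eqxx mulr1 add0r.
    have -> : (i == k) = false by apply/negbTE; rewrite -val_eqE /= neq_ltn ik.
    by rewrite mulr0 addr0.
  have -> : (i == k) = false by apply/negbTE; rewrite -val_eqE /= neq_ltn ik orbT.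
  by rewrite mulr0 addr0.
have pnear : forall (k : 'I_n) (u : R), `|u| <= `|h k ord0| ->
    `|x0 - (p k + u *: ee k)| < d.
  move=> k u Hu; rewrite /p.
  rewrite (_ : forall a b w : vec, a - (a + b + w) = -(b + w)); last first.
    by move=> a b w; rewrite -addrA opprD addrA subrr add0r.
  rewrite normrN.
  apply: le_lt_trans hd; apply: norm_le_entries => // i; rewrite !mxE eqxx andbT.
  case: ifP => ik.
    have -> : (i == k) = false by apply/negbTE; rewrite -val_eqE /= neq_ltn ik.
    by rewrite mulr0 addr0; exact: entry_le_norm.
  rewrite add0r; case: (i == k) => /=.
    by rewrite mulr1; apply: le_trans Hu (entry_le_norm _ _).
  by rewrite mulr0 normr0.
have -> : (f \o shift x0 - (cst (f x0) + L)) h =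
    \sum_(k < n) (f (p k.+1) - f (p k) - h k ord0 * c k).
  rewrite sumrB -(big_mkord xpredT (fun k => f (p k.+1) - f (p k))).
  rewrite telescope_sumr // pn p0 /=.
  change (f (h + x0) - (f x0 + Lf h) = f (h + x0) - f x0 - Lf h); ring.
apply: le_trans (ler_norm_sum _ _ _) _.
apply: (@le_trans _ _ (\sum_(k < n) `|h| * eps')).
  apply: ler_sum => k _.
  rewrite pS.
  have Hb := @mvt_bound R (fun u => f (p k + u *: ee k))
     (fun u => 'D_(ee k) f (p k + u *: ee k)) (h k ord0) (c k) eps'.
  rewrite /= scale0r addr0 in Hb.
  apply: le_trans (Hb _ _) _.
  - move=> u Hu; apply: dir_deriv1; apply: fd.
    by have [] := Hd _ (pnear k u Hu).
  - move=> u Hu; rewrite distrC.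
    by have [_ ->] := Hd _ (pnear k u Hu).
  by rewrite ler_wpM2r ?(ltW eps'0) // entry_le_norm.
rewrite sumr_const card_ord /eps'.
have -> : `|h| * (eps / n.+1%:R) *+ n = (eps * `|h|) * (n%:R / n.+1%:R).
  by rewrite -mulr_natr; field; rewrite nat1r pnatr_eq0.
apply: ler_piMr; first by rewrite mulr_ge0 // ltW.
by rewrite ler_pdivrMr ?ltr0n // mul1r ler_nat.
Unshelve. all: by end_near.
Qed.
End C1n.
Arguments ee {R n}.

Section L2.
Variables (R : realType) (n : nat).
Local Notation vec := 'cV[R]_n.

Lemma col_sum_ee (v : vec) : v = \sum_i v i ord0 *: ee i.
Proof.
apply/matrixP => i j; rewrite (ord1 j) summxE (bigD1 i) //= !mxE eqxx mulr1.
rewrite big1 ?addr0 // => k ki; rewrite !mxE eq_sym (negbTE ki) /= mulr0 //.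
Qed.

Lemma diff_col (F : vec -> vec) x :
  (forall i, differentiable (fun y => F y i ord0) x) -> differentiable F x.
Proof.
move=> H.
have -> : F = \sum_i (fun y => F y i ord0 *: ee i).
  by apply/funext => y; rewrite fct_sumE -col_sum_ee.
apply: differentiable_sum => i.
exact: differentiableZl.
Qed.

Lemma dotv_sum (u v : vec) : dotv u v = \sum_i u i ord0 * v i ord0.
Proof. by rewrite /dotv !mxE; apply: eq_bigr => i _; rewrite !mxE. Qed.

Lemma dotv_ge0 (v : vec) : 0 <= dotv v v.
Proof. by rewrite dotv_sum sumr_ge0 // => i _; rewrite -expr2 sqr_ge0. Qed.

Lemma dotv_gt0 (v : vec) : v != 0 -> 0 < dotv v v.
Proof.
move=> v0; rewrite lt_def dotv_ge0 andbT; apply/eqP => H.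
move/eqP: v0; apply; apply/matrixP => i j; rewrite (ord1 j) mxE.
move: H; rewrite dotv_sum => /psumr_eq0P H.
have := H (fun k _ => ltac:(rewrite -expr2 sqr_ge0 //)) i isT.
by rewrite -expr2 => /eqP; rewrite sqrf_eq0 => /eqP ->.
Qed.


Lemma grad_coord_diff (O : set vec) (phi : vec -> R) x i :
  open O -> smooth_on O phi -> O x ->
  differentiable (fun y => grad phi y i ord0) x.
Proof.
move=> oO sm Ox.
have -> : (fun y => grad phi y i ord0) = (fun y => 'D_(ee i) phi y).
  by apply/funext => y; rewrite mxE.
have [_ H1] := sm 2%N (ee i).
apply: (@C1_differentiable R n _ _ _ oO Ox).
- by move=> v y Oy; have [H2 _] := H1 v; exact: H2.
- by move=> v y Oy; have [_ H3] := H1 v; exact: H3.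
Qed.

Lemma grad_diff (O : set vec) (phi : vec -> R) x :
  open O -> smooth_on O phi -> O x -> differentiable (grad phi) x.
Proof. by move=> oO sm Ox; apply: diff_col => i; exact: (@grad_coord_diff O phi x i oO sm Ox). Qed.

Lemma unormal_diff (O : set vec) (phi : vec -> R) x :
  open O -> smooth_on O phi -> O x -> grad phi x != 0 ->
  differentiable (unormal phi) x.
Proof.
move=> oO sm Ox g0.
have gi := fun i => @grad_coord_diff O phi x i oO sm Ox.
have dd : differentiable (fun y => dotv (grad phi y) (grad phi y)) x.
  have -> : (fun y => dotv (grad phi y) (grad phi y)) =
      \sum_j ((fun y => grad phi y j ord0) * (fun y => grad phi y j ord0)).
    by apply/funext => y; rewrite fct_sumE dotv_sum.
  apply: differentiable_sum => j; exact: differentiableM.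
have pos := @dotv_gt0 _ g0.
have ds : differentiable (fun y => Num.sqrt (dotv (grad phi y) (grad phi y))) x.
  apply: (@differentiable_comp _ _ _ _ (fun y => dotv (grad phi y) (grad phi y)) Num.sqrt).
    exact: dd.
  apply/derivable1_diffP; have [+ _] := is_derive1_sqrt pos; exact.
have dv : differentiable (fun y => (Num.sqrt (dotv (grad phi y) (grad phi y)))^-1) x.
  by apply: differentiableV => //; rewrite sqrtr_eq0 -ltNge.
apply: diff_col => i.
have -> : (fun y => unormal phi y i ord0) =
   (fun y => (Num.sqrt (dotv (grad phi y) (grad phi y)))^-1) * (fun y => grad phi y i ord0).
  by apply/funext => y; rewrite /unormal mxE.
exact: differentiableM.
Qed.

End L2.

Section L3.
Variables (R : realType).

Lemma derive1_comp_diff (V : normedModType R) (F : V -> V) (a : R -> V) t :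
  differentiable F (a t) -> derivable a t 1 ->
  derivable (F \o a) t 1 /\ derive1 (F \o a) t = 'D_(derive1 a t) F (a t).
Proof.
move=> dF da.
have da' : differentiable a t by apply/derivable1_diffP.
have dc := differentiable_comp da' dF.
split; first exact/derivable1_diffP.
rewrite derive1E deriveE // diff_comp // /=.
by rewrite [in RHS]deriveE // derive1E deriveE.
Qed.

Lemma derive1_mulmx m p q (U : R -> 'M[R]_(m,p)) (w : R -> 'M[R]_(p,q)) t :
  derivable U t 1 -> derivable w t 1 ->
  derivable (fun s => U s *m w s) t 1 /\
  derive1 (fun s => U s *m w s) t = derive1 U t *m w t + U t *m derive1 w t.
Proof.
move=> dU dw.
have dU' := (derivable_mxP U t 1).1 dU.
have dw' := (derivable_mxP w t 1).1 dw.
have E : forall i j, (fun s => (U s *m w s) i j) =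
    \sum_k ((fun s => U s i k) * (fun s => w s k j)).
  by move=> i j; apply/funext => s; rewrite fct_sumE mxE.
have D : forall i j, derivable (fun s => (U s *m w s) i j) t 1.
  move=> i j; rewrite E; apply: derivable_sum => k; exact: derivableM.
split; first by apply/derivable_mxP.
rewrite !derive1E !derive_mx //; last by apply/derivable_mxP.
apply/matrixP => i j; rewrite !mxE E derive_sum; last by move=> k; exact: derivableM.
rewrite -big_split /=; apply: eq_bigr => k _.
rewrite deriveM // !mxE.
by rewrite /GRing.scale /=; ring.
Qed.

Lemma derive1_trmx m p (A : R -> 'M[R]_(m,p)) t :
  derivable A t 1 ->
  derivable (fun s => (A s)^T) t 1 /\ derive1 (fun s => (A s)^T) t = (derive1 A t)^T.
Proof.
move=> dA.
have dA' := (derivable_mxP A t 1).1 dA.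
have D : forall i j, derivable (fun s => (A s)^T i j) t 1.
  by move=> i j; have -> : (fun s => (A s)^T i j) = (fun s => A s j i) by apply/funext => s; rewrite mxE.
split; first by apply/derivable_mxP.
rewrite !derive1E !derive_mx //; last by apply/derivable_mxP.
apply/matrixP => i j; rewrite !mxE.
by have -> : (fun s => (A s)^T i j) = (fun s => A s j i) by apply/funext => s; rewrite mxE.
Qed.

End L3.

Section Alg.
Variables (R : realType) (n : nat).
Local Notation vec := 'cV[R]_n.
Local Notation mat := 'M[R]_n.

Lemma dotvE (u v : vec) : dotv u v = \sum_i u i ord0 * v i ord0.
Proof. exact: dotv_sum. Qed.

Lemma dotvC (u v : vec) : dotv u v = dotv v u.
Proof. by rewrite !dotvE; apply: eq_bigr => i _; rewrite mulrC. Qed.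

Lemma dotvDr (u v w : vec) : dotv u (v + w) = dotv u v + dotv u w.
Proof. by rewrite !dotvE -big_split; apply: eq_bigr => i _; rewrite !mxE mulrDr. Qed.

Lemma dotvZr (u v : vec) k : dotv u (k *: v) = k * dotv u v.
Proof. by rewrite !dotvE mulr_sumr; apply: eq_bigr => i _; rewrite !mxE; ring. Qed.

Lemma dotvNr (u v : vec) : dotv u (- v) = - dotv u v.
Proof. by rewrite -scaleN1r dotvZr mulN1r. Qed.

Lemma dotvBr (u v w : vec) : dotv u (v - w) = dotv u v - dotv u w.
Proof. by rewrite dotvDr dotvNr. Qed.

Lemma dotvDl (u v w : vec) : dotv (v + w) u = dotv v u + dotv w u.
Proof. by rewrite dotvC dotvDr !(dotvC u). Qed.

Lemma dotvZl (u v : vec) k : dotv (k *: v) u = k * dotv v u.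
Proof. by rewrite dotvC dotvZr dotvC. Qed.

Lemma mx11E (M : 'M[R]_1) : M = (M 0 0)%:M.
Proof. exact: mx11_scalar. Qed.

Lemma trmx_vec_mul (a x : vec) : a^T *m x = (dotv a x)%:M.
Proof. by rewrite {1}[a^T *m x]mx11E. Qed.

Lemma wedge_mul (a b x : vec) : wedge a b *m x = dotv a x *: b - dotv b x *: a.
Proof.
rewrite /wedge mulmxBl -!mulmxA !trmx_vec_mul.
by rewrite !mul_mx_scalar.
Qed.

Lemma wedgeDl (a b c : vec) : wedge (a + b) c = wedge a c + wedge b c.
Proof.
rewrite /wedge linearD /= mulmxDr mulmxDl.
by rewrite opprD addrACA.
Qed.

Lemma wedgeZl (a c : vec) k : wedge (k *: a) c = k *: wedge a c.
Proof.
by rewrite /wedge linearZ /= -scalemxAr -scalemxAl scalerBr.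
Qed.

Lemma wedgeNl (a c : vec) : wedge (- a) c = - wedge a c.
Proof. by rewrite -scaleN1r wedgeZl scaleN1r. Qed.

Lemma wedgeBl (a b c : vec) : wedge (a - b) c = wedge a c - wedge b c.
Proof. by rewrite wedgeDl wedgeNl. Qed.

Lemma wedge_self (a : vec) : wedge a a = 0.
Proof. by rewrite /wedge subrr. Qed.

Lemma wedge_skew (a b : vec) : Defs.skew (wedge a b).
Proof.
by rewrite /Defs.skew /wedge linearB /= !trmx_mul !trmxK opprB.
Qed.

Lemma entry11_tr (M : 'M[R]_1) : (M^T) 0 0 = M 0 0.
Proof. by rewrite mxE. Qed.

Lemma dot_skew (V : mat) (x : vec) : Defs.skew V -> dotv x (V *m x) = 0.
Proof.
move=> sV.
have E : dotv x (V *m x) = - dotv x (V *m x).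
  rewrite [in LHS]dotvC /dotv trmx_mul sV mulmxN mulNmx -mulmxA.
  by rewrite [in LHS]mxE.
have : dotv x (V *m x) *+ 2 = 0 by rewrite mulr2n {1}E addNr.
by move/eqP; rewrite mulrn_eq0 /= => /eqP.
Qed.

Lemma tr11 (M : 'M[R]_1) : \tr M = M 0 0.
Proof. by rewrite /mxtrace big_ord1. Qed.

Lemma tr_DDt (D : mat) : \tr (D *m D^T) = \sum_i \sum_j D i j ^+ 2.
Proof.
rewrite /mxtrace; apply: eq_bigr => i _; rewrite mxE; apply: eq_bigr => j _.
by rewrite mxE expr2.
Qed.

Lemma tr_DDt0 (D : mat) : \tr (D *m D^T) = 0 -> D = 0.
Proof.
rewrite tr_DDt => H.
have Hp : forall i : 'I_n, 0 <= \sum_j D i j ^+ 2.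
  by move=> i; apply: sumr_ge0 => j _; exact: sqr_ge0.
move/psumr_eq0P: H => /(_ (fun i _ => Hp i)) H.
apply/matrixP => i j; rewrite [RHS]mxE.
have /psumr_eq0P Hij := H i isT.
have := Hij (fun j _ => sqr_ge0 (D i j)) j isT.
by move/eqP; rewrite sqrf_eq0 => /eqP.
Qed.

Lemma trB (A B : mat) : \tr (A - B) = \tr A - \tr B.
Proof. exact: raddfB. Qed.

Lemma dot_skew_swap (D : mat) (u v : vec) : Defs.skew D ->
  dotv u (D *m v) = - dotv v (D *m u).
Proof.
move=> sD.
rewrite [in LHS]dotvC /dotv trmx_mul sD mulmxN mulNmx -mulmxA.
by rewrite [in LHS]mxE.
Qed.

Lemma neg11 (M : 'M[R]_1) : (- M) 0 0 = - M 0 0.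
Proof. by rewrite mxE. Qed.

Lemma tr_wedge (N2 nu : vec) (D : mat) : Defs.skew D ->
  \tr (wedge N2 nu *m D^T) = -2 * dotv N2 (D *m nu).
Proof.
move=> sD.
rewrite /wedge (mulmxBl (nu *m N2^T) (N2 *m nu^T) D^T) trB.
rewrite -(mulmxA nu) -(mulmxA N2) (mxtrace_mulC nu) (mxtrace_mulC N2) !tr11.
rewrite sD !mulmxN !mulNmx !neg11 -(mulmxA N2^T) -(mulmxA nu^T).
have -> : (N2^T *m (D *m nu)) 0 0 = dotv N2 (D *m nu) by [].
have -> : (nu^T *m (D *m N2)) 0 0 = dotv nu (D *m N2) by [].
rewrite (@dot_skew_swap D nu N2 sD).
lra.
Qed.

Lemma kinetic_solve (V : mat) (N2 nu : vec) (k1 k2 : R) : k1 != 0 -> Defs.skew V ->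
  (forall W, Defs.skew W -> k1 * \tr (V *m W^T) + k2 * dotv N2 (W *m nu) = 0) ->
  V = (k2 / (2 * k1)) *: wedge N2 nu.
Proof.
move=> k10 sV H.
pose c := k2 / (2 * k1).
pose D := V - c *: wedge N2 nu.
have sD : Defs.skew D.
  rewrite /Defs.skew /D.
  rewrite (linearB (@trmx R n n)) /=.
  rewrite linearZ /=.
  rewrite sV (wedge_skew N2 nu) scalerN opprB.
  by rewrite opprK addrC.
have HD := H D sD.
have T : \tr (D *m D^T) = 0.
  rewrite {1}/D (mulmxBl V (c *: wedge N2 nu) D^T) trB.
  rewrite -(scalemxAl c (wedge N2 nu) D^T) mxtraceZ (@tr_wedge N2 nu D sD).
  have E1 : k1 * \tr (V *m D^T) = - (k2 * dotv N2 (D *m nu)) by lra.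
  rewrite -(mulKf k10 (\tr (V *m D^T))) E1 /c.
  by field.
by apply/eqP; rewrite -subr_eq0 -/c -/D; apply/eqP; exact: tr_DDt0.
Qed.

Lemma final_alg (V : mat) (nu N2 a2 X e : vec) (r gam g : R) :
  0 < r -> 0 < gam -> Defs.skew V -> dotv nu nu = 1 ->
  V = (r * gam^+2)^-1 *: wedge N2 nu ->
  N2 = a2 - dotv nu a2 *: nu + g *: e ->
  a2 + g *: e = r *: (V *m nu) - X ->
  V = - ((1 + gam^+2) * r)^-1 *: wedge X nu.
Proof.
move=> r0 g0 sV nn HV HN2 HX.
pose c := (r * gam^+2)^-1.
pose y := V *m nu.
have W1 : wedge N2 nu = r *: wedge y nu - wedge X nu.
  have -> : N2 = (a2 + g *: e) - dotv nu a2 *: nu.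
    by rewrite HN2 addrAC.
  rewrite wedgeBl wedgeZl wedge_self scaler0 subr0 HX wedgeBl wedgeZl //.
have E1 : V = c *: (r *: wedge y nu - wedge X nu) by rewrite {1}HV W1.
have Hy : dotv y nu = 0 by rewrite dotvC dot_skew.
have E2 : y = c *: (r *: (- y) - (dotv X nu *: nu - X)).
  rewrite {1}/y {1}E1 -scalemxAl mulmxBl -scalemxAl !wedge_mul Hy nn.
  by rewrite scale0r scale1r sub0r scale1r.
pose Z := X - dotv X nu *: nu.
have E2' : (1 + c * r) *: y = c *: Z.
  rewrite scalerDl scale1r {1}E2 /Z opprB scalerDr !scalerN scalerA.
  by rewrite addrAC addNr add0r.
have c0 : 0 < c by rewrite /c invr_gt0 mulr_gt0 // exprn_gt0.
have cr0 : 1 + c * r != 0 by rewrite lt0r_neq0 // addr_gt0 // mulr_gt0.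
have E3 : y = (c / (1 + c * r)) *: Z.
  apply: (scalerI cr0); rewrite E2' scalerA; congr (_ *: _).
  by rewrite mulrCA mulfV // mulr1.
have W2 : wedge y nu = (c / (1 + c * r)) *: wedge X nu.
  by rewrite E3 wedgeZl /Z wedgeBl wedgeZl wedge_self scaler0 subr0.
rewrite E1 W2 scalerA -[X in _ - X](scale1r) -scalerBl scalerA; congr (_ *: _).
rewrite /c; field.
rewrite !lt0r_neq0 //; last by rewrite addr_gt0 // exprn_gt0.
Qed.

End Alg.

Lemma unormal_unit (R : realType) n (phi : 'cV[R]_n -> R) x :
  grad phi x != 0 -> dotv (unormal phi x) (unormal phi x) = 1.
Proof.
move=> g0; rewrite /unormal dotvZl dotvZr.
have q0 := @dotv_gt0 _ _ _ g0.
have s2 := sqr_sqrtr (ltW q0).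
have s0 : Num.sqrt (dotv (grad phi x) (grad phi x)) != 0.
  by rewrite lt0r_neq0 // sqrtr_gt0.
rewrite -{3}s2; field; exact: s0.
Qed.

Theorem proposition4p1 (R : realType) (n : nat)
    (O : set 'cV[R]_n) (phi : 'cV[R]_n -> R) (e : 'cV[R]_n)
    (m r gamma g : R) (I : set R) (A : R -> 'M[R]_n) (a : R -> 'cV[R]_n) :
  0 < m -> 0 < r -> 0 < gamma ->
  regular_defining O phi -> cylinder O phi e ->
  open I ->
  constrained_newton O phi m r gamma (0, - (m * g) *: e) I A a ->
  forall t, I t ->
    [/\ derive1 a t = r *: (angvel A t *m unormal phi (a t)),
        derive1 A t = angvel A t *m A t &
        derive1 (angvel A) t =
          - ((1 + gamma ^+ 2) * r)^-1 *:
            wedge (r ^+ 2 *: (angvel A t *m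
                       shapeop phi (a t) (angvel A t *m unormal phi (a t)))
                   - g *: e)
                  (unormal phi (a t))].
Proof.
move=> m0 r0 gam0 [oO [sm gnz]] _ oI CN t It.
have [rotA [hs [dA [da [ddA [dda [ns [N [Nperp NE]]]]]]]]] := CN t It.
have Ainv : forall s, I s -> invmx (A s) = (A s)^T.
  move=> s Is; have [[rot1 rot2] _] := CN s Is.
  have Us : A s \in unitmx by rewrite unitmxE rot2 unitr1.
  by rewrite -[invmx (A s)]mulmx1 -(mulmx1C rot1) mulmxA mulVmx // mul1mx.
have Aunit : A t \in unitmx by rewrite unitmxE rotA.2 unitr1.
split.
- by case: ns.
- by rewrite /angvel -mulmxA mulVmx // mulmx1.
case: NE => E1 E2.
have HV1 : N.1 = derive1 (angvel A) t *m A t by rewrite E1 /= scaler0 add0r.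
have [[skN tanN] kin] := Nperp.
have skV : Defs.skew (derive1 (angvel A) t).
  by move: skN; rewrite HV1 mulmxK.
have nn := @unormal_unit R n phi (a t) (gnz _ hs).
have Kin : forall W, Defs.skew W ->
    ((r * gamma) ^+ 2 / 2) * \tr (derive1 (angvel A) t *m W^T)
    + r * dotv N.2 (W *m unormal phi (a t)) = 0.
  move=> W sW.
  have ns' : noslip phi r (A t) (a t) (W *m A t, r *: (W *m unormal phi (a t))).
    split; last by rewrite /= mulmxK.
    split; first by rewrite /= mulmxK.
    by rewrite /tangentS /= (@dotvZr R n) (@dot_skew R n) // mulr0.
  have := kin _ ns'; rewrite /kinetic /= HV1 !mulmxK //.
  rewrite (@dotvZr R n) => /eqP; rewrite mulf_eq0 (gt_eqF m0) /= => /eqP.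
  by [].
have HVk : derive1 (angvel A) t =
    (r * gamma ^+ 2)^-1 *: wedge N.2 (unormal phi (a t)).
  rewrite {1}(@kinetic_solve R n _ _ _ _ _ _ skV Kin); last first.
    by rewrite lt0r_neq0 // divr_gt0 // exprn_gt0 // mulr_gt0.
  congr (_ *: _); field.
  by rewrite !lt0r_neq0.
have nearI : \forall s \near t, I s by apply: open_nbhs_nbhs; split.
have Ueq : \forall s \near t, derive1 A s *m (A s)^T = angvel A s.
  by near=> s; rewrite /angvel Ainv //; near: s.
have [Pd _] := @derive1_mulmx R _ _ _ _ _ t ddA (@derive1_trmx R _ _ _ t dA).1.
have Ud : derivable (angvel A) t 1 := near_eq_derivable Ueq Pd.
have wdiff : differentiable (unormal phi) (a t) :=
  @unormal_diff R n O phi (a t) oO sm hs.1 (gnz _ hs).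
have [wd wD] := @derive1_comp_diff R _ (unormal phi) a t wdiff da.
have [Fd pD] := @derive1_mulmx R n n 1 (angvel A) (unormal phi \o a) t Ud wd.
have aeq : \forall s \near t, r *: (angvel A s *m (unormal phi \o a) s) = derive1 a s.
  near=> s; have Is : I s by near: s; exact: nearI.
  by have [_ [_ [_ [_ [_ [_ [[_ /= ->] _]]]]]]] := CN s Is.
have a2E : derive1 (derive1 a) t =
    r *: derive1 (fun s => angvel A s *m (unormal phi \o a) s) t.
  rewrite derive1E -(@near_eq_derive R _ _ _ _ t 1 aeq).
  rewrite [in RHS]derive1E.
  have -> : (fun s => r *: (angvel A s *m (unormal phi \o a) s)) =
      r *: (fun s => angvel A s *m (unormal phi \o a) s) by apply/funext.
  by apply: deriveZ; exact: Fd.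
have DS : 'D_(derive1 a t) (unormal phi) (a t) =
    - r *: shapeop phi (a t) (angvel A t *m unormal phi (a t)).
  have E : derive1 a t = r *: (angvel A t *m unormal phi (a t)) by case: ns.
  rewrite E /shapeop.
  have D1 := @deriveE R _ _ (unormal phi) (a t) (angvel A t *m unormal phi (a t)) wdiff.
  have D2 := @deriveE R _ _ (unormal phi) (a t) (r *: (angvel A t *m unormal phi (a t))) wdiff.
  by rewrite D1 D2 linearZ /= scaleNr scalerN opprK.
have a2full : derive1 (derive1 a) t =
    r *: (derive1 (angvel A) t *m unormal phi (a t))
    - r ^+ 2 *: (angvel A t *m shapeop phi (a t) (angvel A t *m unormal phi (a t))).
  rewrite a2E pD wD DS /= scalerDr.
  by rewrite -(scalemxAr (- r) (angvel A t)) scalerA mulrN -expr2 scaleNr.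
have HN2 : N.2 = derive1 (derive1 a) t
    - dotv (unormal phi (a t)) (derive1 (derive1 a) t) *: unormal phi (a t) + g *: e.
  have -> : N.2 = covD phi (a t) (derive1 (derive1 a) t) - m^-1 *: (- (m * g) *: e).
    by rewrite E2 addrC addKr.
  have sc0 : m^-1 * - (m * g) = - g by field; rewrite gt_eqF.
  have sc : m^-1 *: (- (m * g) *: e) = - (g *: e).
    by rewrite scalerA sc0 scaleNr.
  by rewrite sc opprK.
apply: (@final_alg R n _ _ _ _ _ e r gamma g r0 gam0 skV nn HVk HN2).
rewrite a2full.
by rewrite opprB addrA addrAC.
Unshelve. all: by end_near.
Qed.
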